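(* Let $G$ be a graph and let $\mathcal{B}$ be a bramble in $G$ of maximum order. If $X \subseteq V(G)$ is such that $\mathcal{B}_X$ has order at most $k$, then $\operatorname{tw}(G) \le \operatorname{tw}(G-X) + k$.
   Context: All graphs are finite and simple. A bramble $\mathcal{B}$ in a graph $G$ is a family of connected subgraphs of $G$ such that every two of them share a vertex or are joined by an edge of $G$. A hitting set for $\mathcal{B}$ is a set of vertices intersecting every element of $\mathcal{B}$; the order of $\mathcal{B}$ is the minimum size of a hitting set. Any subset of a bramble is a bramble. For $X\subseteq V(G)$, $\mathcal{B}_X$ denotes the set of elements of $\mathcal{B}$ that intersect $X$. $\operatorname{tw}(G)$ denotes the treewidth of $G$. *)

(* Defs.v *)
(* A simple graph is a symmetric irreflexive relation e on a finType T. *)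
From mathcomp Require Import all_boot all_order all_algebra.
Set Implicit Arguments. Unset Strict Implicit. Unset Printing Implicit Defensive.
Import Order.TTheory GRing.Theory Num.Theory.

Section Defs.
Variable T : finType.
Variable e : rel T.

Definition induced (A : {set T}) : rel T :=
  [rel a b | e a b && (a \in A) && (b \in A)].

Definition connected_set (A : {set T}) : bool :=
  (A != set0) && [forall x in A, forall y in A, connect (induced A) x y].

Definition touch (A B : {set T}) : bool :=
  (A :&: B != set0) || [exists x in A, exists y in B, e x y].

Definition is_bramble (Br : {set {set T}}) : Prop :=
  (forall A, A \in Br -> connected_set A) /\
  (forall A B, A \in Br -> B \in Br -> touch A B).

Definition hitting (Br : {set {set T}}) (H : {set T}) : bool :=
  [forall A in Br, H :&: A != set0].

(* order = minimum size of a hitting set (setT is always one for a bramble) *)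
Definition bramble_order (Br : {set {set T}}) : nat :=
  \big[minn/#|T|]_(H : {set T} | hitting Br H) #|H|.

Definition bramble_restr (Br : {set {set T}}) (X : {set T}) : {set {set T}} :=
  [set A in Br | A :&: X != set0].

Definition max_order_bramble (Br : {set {set T}}) : Prop :=
  is_bramble Br /\
  (forall Br' : {set {set T}}, is_bramble Br' -> bramble_order Br' <= bramble_order Br).

End Defs.

Definition is_tree (I : finType) (t : rel I) : Prop :=
  [/\ 0 < #|I|, symmetric t, irreflexive t,
      (forall x y, connect t x y) &
      (forall x (p : seq I), uniq (x :: p) -> path t x p -> t (last x p) x -> size p < 2)].

Definition tree_decomp (T : finType) (e : rel T) (S : {set T})
    (I : finType) (t : rel I) (B : I -> {set T}) : Prop :=
  [/\ is_tree t,
      (forall i, B i \subset S),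
      (forall v, v \in S -> exists i, v \in B i),
      (forall u v, u \in S -> v \in S -> e u v -> exists i, (u \in B i) && (v \in B i)) &
      (forall v i j, v \in B i -> v \in B j ->
          connect [rel a b | t a b && (v \in B a) && (v \in B b)] i j)].

(* width = max bag size - 1, as an integer (so the empty graph has width -1) *)
Definition td_width (T I : finType) (B : I -> {set T}) : int :=
  ((\max_(i : I) #|B i|)%N)%:Z - 1.

Definition has_treewidth (T : finType) (e : rel T) (S : {set T}) (w : int) : Prop :=
  (exists (I : finType) (t : rel I) (B : I -> {set T}),
      tree_decomp e S t B /\ td_width B = w) /\
  (forall (I : finType) (t : rel I) (B : I -> {set T}),
      tree_decomp e S t B -> (w <= td_width B)%R).

(* Main.v *)
Require Import Defs.
From mathcomp Require Import all_boot all_order all_algebra zify.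
From Stdlib Require Import ClassicalEpsilon Classical.
Set Implicit Arguments. Unset Strict Implicit. Unset Printing Implicit Defensive.

Definition pb (P : Prop) : bool := if excluded_middle_informative P then true else false.
Lemma pbP (P : Prop) : reflect P (pb P).
Proof. rewrite /pb; case: excluded_middle_informative => h; by constructor. Qed.

Section Gen.
Variable I : finType.
Implicit Types (e : rel I) (a b c x y z : I) (p : seq I).

Definition avoid e c : rel I := [rel a b | e a b && (a != c) && (b != c)].

Lemma path_avoid_all e c x p : path (avoid e c) x p -> all (fun z => z != c) p.
Proof. by elim: p x => //= y p IH x /andP[/andP[/andP[_ _ ->]] /IH]. Qed.

Lemma all_path_avoid e c x p : x != c -> all (fun z => z != c) p -> path e x p ->
  path (avoid e c) x p.
Proof.
elim: p x => //= y p IH x xc /andP[yc ap] /andP[exy pp].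
apply/andP; split; last exact: IH.
by rewrite /avoid /= exy xc yc.
Qed.

Lemma mem_connect_last e x p z : path e x p -> z \in x :: p -> connect e z (last x p).
Proof.
elim: p x z => [|y p IH] x z /=; first by rewrite inE => _ /eqP->; exact: connect0.
move=> /andP[exy pp]; rewrite inE => /orP[/eqP-> | zin].
  exact: connect_trans (connect1 exy) (IH y y pp (mem_head y p)).
exact: IH.
Qed.

Lemma connect_avoid e a b c : connect e a b -> ~~ connect e c b -> connect (avoid e c) a b.
Proof.
move=> /connectP[p pp ->] nc.
have nin : c \notin a :: p.
  by apply/negP => /(mem_connect_last pp) h; rewrite h in nc.
rewrite inE negb_or in nin; case/andP: nin => ca nin.
apply/connectP; exists p => //; apply: all_path_avoid => //; first by rewrite eq_sym.
by apply/allP => z zp; apply/eqP => zc; rewrite -zc zp in nin.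
Qed.

Lemma connect_first e a b : a != b -> connect e a b ->
  exists2 j, e a j & connect (avoid e a) j b.
Proof.
move=> ab /connectP[p pp bE]; subst b; case/shortenP: pp ab => p' pp' up' _.
case: p' pp' up' => [|j q] /=; first by rewrite eqxx.
move=> /andP[eaj pq]; rewrite inE negb_or => /andP[/andP[aj anq] _] _.
exists j => //; apply/connectP; exists q => //.
apply: all_path_avoid => //; first by rewrite eq_sym.
by apply/allP => z zq; apply/eqP => za; rewrite -za zq in anq.
Qed.

Lemma connect_avoid_end e a c : connect (avoid e c) a c -> a = c.
Proof.
move=> /connectP[p pp lc]; case: p pp lc => [//|y p] pp lc.
have := path_avoid_all pp; move/allP => /(_ (last y p) (mem_last y p)).
by rewrite /= in lc; rewrite -lc eqxx.
Qed.

Lemma sub_connect e e' : subrel e e' -> subrel (connect e) (connect e').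
Proof.
move=> sub a b /connectP[p pp ->]; apply/connectP; exists p => //; exact: sub_path pp.
Qed.

Lemma connect_ind' e (P : I -> Prop) a b : P a -> (forall u v, P u -> e u v -> P v) ->
  connect e a b -> P b.
Proof.
move=> Pa step /connectP[p pp ->]; elim: p a Pa pp => //= y p IH a Pa /andP[eay pp].
exact: IH (step _ _ Pa eay) pp.
Qed.

Lemma sym_avoid e c : symmetric e -> symmetric (avoid e c).
Proof. by move=> se a b; rewrite /avoid /= se andbAC. Qed.

End Gen.

Section Rooted.
Variable I : finType.

Definition tp (par : I -> I) : rel I := [rel i j | (i != j) && ((par i == j) || (par j == i))].
Definition rooted (t : rel I) (r : I) (par : I -> I) (rk : I -> nat) :=
  [/\ par r = r, forall i, i != r -> rk (par i) < rk i & t =2 tp par].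
Definition desc (par : I -> I) i a := exists n, iter n par i = a.
Definition restr (t : rel I) (S : pred I) : rel I := [rel x y | t x y && S x && S y].
Definition conn_nodes (t : rel I) (S : pred I) :=
  forall a b, S a -> S b -> connect (restr t S) a b.
Definition istop (r : I) (par : I -> I) (S : pred I) a := a = r \/ ~~ S (par a).

Lemma restr_sym t S : symmetric t -> symmetric (restr t S).
Proof. by move=> st x y; rewrite /restr /= st andbAC. Qed.

Variables (t : rel I) (r : I) (par : I -> I) (rk : I -> nat).
Hypothesis Hr : rooted t r par rk.

Lemma par_r : par r = r. Proof. by case: Hr. Qed.
Lemma rk_par i : i != r -> rk (par i) < rk i. Proof. by case: Hr => _ h _; apply: h. Qed.
Lemma tE i j : t i j = tp par i j. Proof. by case: Hr => _ _ h; apply: h. Qed.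

Lemma t_sym : symmetric t.
Proof. by move=> i j; rewrite !tE /tp /= eq_sym orbC. Qed.
Lemma t_irr : irreflexive t.
Proof. by move=> i; rewrite tE /tp /= eqxx. Qed.

Lemma par_neq i : i != r -> par i != i.
Proof. by move=> ir; apply/eqP => h; have := rk_par ir; rewrite h ltnn. Qed.

Lemma t_par i : i != r -> t i (par i).
Proof. by move=> ir; rewrite tE /tp /= eqxx eq_sym par_neq. Qed.

Lemma t_cases i j : t i j -> i != j /\ (par i = j \/ par j = i).
Proof. by rewrite tE /tp /= => /andP[ne /orP[/eqP h|/eqP h]]; split => //; [left|right]. Qed.

Lemma desc_refl i : desc par i i. Proof. by exists 0. Qed.
Lemma desc_par1 i : desc par i (par i). Proof. by exists 1. Qed.

Lemma desc_trans i u a : desc par i u -> desc par u a -> desc par i a.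
Proof. by move=> [n <-] [m <-]; exists (m + n); rewrite iterD. Qed.

Lemma desc_par i a : desc par i a -> i != a -> desc par (par i) a.
Proof.
case=> [[|n] hn] ia; first by rewrite -hn /= eqxx in ia.
by exists n; rewrite -hn iterSr.
Qed.

Lemma desc_rk i a : desc par i a -> i != a -> rk a < rk i.
Proof.
case=> n; elim: n i => [|n IH] i; first by move=> /= ->; rewrite eqxx.
rewrite iterSr => hn ia; case: (eqVneq i r) => [ir|ir].
  by subst i; rewrite par_r in hn; apply: IH.
have := rk_par ir; case: (eqVneq (par i) a) => [<- //|pa].
by move=> h; apply: ltn_trans (IH _ hn pa) h.
Qed.

Lemma desc_antisym a b : desc par a b -> desc par b a -> a = b.
Proof.
move=> hab hba; apply/eqP; apply/negPn/negP => ne.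
have := desc_rk hab ne; rewrite eq_sym in ne; have := desc_rk hba ne.
by move=> h1 h2; have := ltn_trans h1 h2; rewrite ltnn.
Qed.

Lemma desc_root i : desc par i r.
Proof.
elim: {i}(rk i).+1 {-2}i (ltnSn (rk i)) => // n IH i lt.
case: (eqVneq i r) => [->|ir]; first exact: desc_refl.
apply: desc_trans (desc_par1 i) (IH _ _).
by apply: leq_trans (rk_par ir) _.
Qed.

Lemma desc_comp c u w : desc par c u -> desc par c w -> desc par u w \/ desc par w u.
Proof.
move=> [m <-] [n <-]; case: (leqP m n) => mn.
  by left; exists (n - m); rewrite -iterD subnK.
by right; exists (m - n); rewrite -iterD subnK // ltnW.
Qed.

Lemma conn_top (S : pred I) a b : conn_nodes t S -> S a -> S b -> istop r par S a ->
  desc par b a.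
Proof.
move=> cS Sa Sb ta; have := cS a b Sa Sb.
apply: (@connect_ind' _ _ (fun x => desc par x a) a b (desc_refl a)) => u v du /andP[/andP[tuv Su] Sv].
case: (t_cases tuv) => uv [pu|pv].
  case: (eqVneq u a) => [ua|ua]; last by rewrite -pu; apply: desc_par.
  case: ta => [ar|nS]; first by move: uv; rewrite -pu ua ar par_r eqxx.
  by move: nS; rewrite -ua pu Sv.
by apply: desc_trans du; rewrite -pv; apply: desc_par1.
Qed.

Lemma top_par (S : pred I) a b : conn_nodes t S -> S a -> istop r par S a -> S b ->
  b != a -> S (par b).
Proof.
move=> cS Sa ta Sb ba; case: (eqVneq b r) => [br|br]; first by rewrite br par_r -br.
apply/negPn/negP => nS.
have h1 := conn_top cS Sa Sb ta.
have h2 := conn_top cS Sb Sa (or_intror nS).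
by move: ba; rewrite (desc_antisym h1 h2) eqxx.
Qed.

Lemma climb (S : pred I) a c u : conn_nodes t S -> S a -> istop r par S a -> S c ->
  desc par c u -> desc par u a -> S u.
Proof.
move=> cS Sa ta Sc [m <-]; elim: m c Sc => [|m IH] c Sc; first by move=> _.
rewrite iterSr => hd.
case: (eqVneq c a) => [ca|ca].
  have hd' : desc par a (iter m par (par c)) by rewrite -ca; exists m.+1; rewrite iterSr.
  by rewrite -(desc_antisym hd' hd).
exact: IH (top_par cS Sa ta Sc ca) hd.
Qed.

Lemma top_exists (S : pred I) a0 : S a0 -> exists a, S a /\ istop r par S a.
Proof.
move=> Sa0; case: (arg_minnP rk Sa0) => a Sa amin; exists a; split => //.
case: (eqVneq a r) => [->|ar]; [by left|right].
by apply/negP => Sp; have := amin _ Sp; rewrite leqNgt rk_par.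
Qed.

Lemma conn_of_top (S : pred I) tp0 : S tp0 ->
  (forall a, S a -> a != tp0 -> (a != r) && S (par a)) -> conn_nodes t S.
Proof.
move=> St h.
have toTop : forall a, S a -> connect (restr t S) a tp0.
  move=> a; elim: {a}(rk a).+1 {-2}a (ltnSn (rk a)) => // n IH a lt Sa.
  case: (eqVneq a tp0) => [->|ne]; first exact: connect0.
  case/andP: (h a Sa ne) => ar Sp.
  apply: connect_trans (connect1 _) (IH _ _ Sp); first by rewrite /restr /= t_par // Sa Sp.
  exact: leq_trans (rk_par ar) _.
move=> a b Sa Sb; apply: connect_trans (toTop a Sa) _.
by rewrite (sym_connect_sym (restr_sym S t_sym)) toTop.
Qed.

Lemma par_of_max u v : t u v -> rk v <= rk u -> par u = v.
Proof.
move=> tuv le; case: (t_cases tuv) => uv [//|pv].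
case: (eqVneq v r) => [vr|vr].
  by move: uv; rewrite -pv vr par_r eqxx.
by have := rk_par vr; rewrite pv ltnNge le.
Qed.

Lemma rooted_tree : is_tree t.
Proof.
split.
- by apply/card_gt0P; exists r.
- exact: t_sym.
- exact: t_irr.
- have toR : forall x, connect t x r.
    move=> x; elim: {x}(rk x).+1 {-2}x (ltnSn (rk x)) => // n IH x lt.
    case: (eqVneq x r) => [->|xr]; first exact: connect0.
    apply: connect_trans (connect1 (t_par xr)) (IH _ _).
    exact: leq_trans (rk_par xr) _.
  by move=> x y; apply: connect_trans (toR x) _; rewrite (sym_connect_sym t_sym) toR.
- move=> x p up pp lt; rewrite ltnNge; apply/negP => sz.
  have cyc : cycle t (x :: p) by rewrite /cycle rcons_path pp lt.
  have xc : x \in x :: p by apply: mem_head.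
  case: (arg_maxnP rk xc) => u uc umax.
  have := rot_index uc; set c' := rot _ _ => ec'.
  have cyc' : cycle t c' by rewrite /c' rot_cycle.
  have uc' : uniq c' by rewrite /c' rot_uniq.
  have szc : size c' = (size p).+1 by rewrite /c' size_rot.
  have memc : forall z, z \in c' -> z \in x :: p by move=> z; rewrite /c' mem_rot.
  move: cyc' uc' szc memc; rewrite ec'; set q := _ ++ _.
  case: q => [|a [|y q1]] /=; try by move=> _ _ [] h; rewrite -h in sz.
  rewrite rcons_path /= => /and4P[tua _ _ tbu] /and4P[_ aq _ _] _ memc.
  have p1 : par u = a by apply: par_of_max tua (umax _ (memc _ _)); rewrite !inE eqxx orbT.
  have p2 : par u = last y q1.
    apply: par_of_max; first by rewrite t_sym.
    by apply: umax; apply: memc; rewrite in_cons in_cons mem_last !orbT.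
  by move: aq; rewrite -p1 p2 mem_last.
Qed.

Lemma iter_root n : iter n par r = r.
Proof. by elim: n => //= n ->; rewrite par_r. Qed.

Lemma desc_from_root a : desc par r a -> a = r.
Proof. by case=> n <-; rewrite iter_root. Qed.

Lemma top_root (S : pred I) a : conn_nodes t S -> S r -> S a -> istop r par S a -> a = r.
Proof. by move=> cS Sr Sa ta; apply: desc_from_root; apply: conn_top cS Sa Sr ta. Qed.

Lemma root_istop (S : pred I) : istop r par S r.
Proof. by left. Qed.

End Rooted.

Section Rooting.
Variable I : finType.
Variable t : rel I.
Hypothesis Ht : is_tree t.
Variable r : I.

Let Hsym : symmetric t. Proof. by case: Ht. Qed.
Let Hirr : irreflexive t. Proof. by case: Ht. Qed.
Let Hconn : forall x y, connect t x y. Proof. by case: Ht. Qed.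
Let Hacyc : forall x (p : seq I), uniq (x :: p) -> path t x p -> t (last x p) x -> size p < 2.
Proof. by case: Ht. Qed.

Lemma tree_core i j1 j2 : j1 != j2 -> t i j1 -> t i j2 -> connect (avoid t i) j1 j2 -> False.
Proof.
move=> ne tij1 tij2 /connectP[q0 pp e2]; subst j2.
case/shortenP: pp ne tij2 => q pq uq _ ne tij2.
have ji : j1 != i by apply/eqP => h; rewrite h Hirr in tij1.
have allq := path_avoid_all pq.
have iq : i \notin j1 :: q.
  rewrite inE negb_or eq_sym ji /=; apply/negP => iq.
  by move/allP: allq => /(_ _ iq); rewrite eqxx.
have sz : size (j1 :: q) < 2.
  apply: (@Hacyc i); first by rewrite cons_uniq iq uq.
    rewrite /= tij1 /=; apply: sub_path pq => a b /andP[/andP[]] //.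
  by rewrite /= Hsym.
by case: q {pq uq allq iq} ne tij2 sz => [|z q] //=; rewrite eqxx.
Qed.

Definition rpar i := if i == r then r else odflt i [pick j | t i j && connect (avoid t i) j r].

Lemma rpar1 i : i != r -> t i (rpar i) && connect (avoid t i) (rpar i) r.
Proof.
move=> ir; rewrite /rpar (negbTE ir); case: pickP => [j -> //|none].
case: (connect_first ir (Hconn i r)) => j tij cj.
by have := none j; rewrite tij cj.
Qed.

Lemma rpar2 i j : i != r -> t i j -> connect (avoid t i) j r -> j = rpar i.
Proof.
move=> ir tij cj; apply/eqP; apply/negP => /negP ne.
case/andP: (rpar1 ir) => tip cp.
apply: (tree_core ne tij tip); apply: connect_trans cj _.
by rewrite (sym_connect_sym (sym_avoid i Hsym)).
Qed.

Lemma rpar3 i j : t i j -> rpar i = j \/ rpar j = i.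
Proof.
move=> tij; have ij : i != j by apply/eqP => h; rewrite h Hirr in tij.
case: (eqVneq i r) => [ir|ir].
  right; subst i; have jr : j != r by rewrite eq_sym.
  apply/esym/rpar2 => //; try exact: connect0; by rewrite Hsym.
case: (eqVneq j r) => [jr|jr].
  by left; subst j; apply/esym/rpar2 => //; apply: connect0.
case: (eqVneq (rpar i) j) => [->|pj]; [by left|right].
have nj : ~~ connect (avoid t i) j r.
  by apply/negP => h; move: pj; rewrite -(rpar2 ir tij h) eqxx.
case/andP: (rpar1 ir) => tip cp.
have h1 := connect_avoid cp nj.
have h2 : connect (avoid t j) (rpar i) r.
  by apply: sub_connect h1 => a b; rewrite /avoid /= => /andP[/andP[/andP[/andP[-> _] _] ->] ->].
apply/esym/rpar2 => //; first by rewrite Hsym.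
apply: connect_trans h2; apply: connect1; by rewrite /avoid /= tip ij pj.
Qed.

Definition rrk i := if i == r then 0 else #|[set k | connect (avoid t i) r k]|.

Lemma rrk_par i : i != r -> rrk (rpar i) < rrk i.
Proof.
move=> ir; case/andP: (rpar1 ir) => tip cp.
case: (eqVneq (rpar i) r) => [pr|pr].
  by rewrite /rrk pr eqxx (negbTE ir); apply/card_gt0P; exists r; rewrite inE connect0.
rewrite /rrk (negbTE ir) (negbTE pr).
apply: proper_card; apply/properP; split.
  apply/subsetP => k; rewrite !inE => hk.
  case: (boolP (connect (avoid t (rpar i)) i k)) => hik.
    have cir : connect (avoid t (rpar i)) i r.
      apply: connect_trans hik _.
      by rewrite (sym_connect_sym (sym_avoid _ Hsym)).
    case: (connect_first ir cir) => j /andP[/andP[tij _] jp] cj.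
    have cj' : connect (avoid t i) j r.
      by apply: sub_connect cj => a b; rewrite /avoid /= => /andP[/andP[/andP[/andP[-> _] _] ->] ->].
    by move: jp; rewrite (rpar2 ir tij cj') eqxx.
  have := connect_avoid hk hik.
  by apply: sub_connect => a b; rewrite /avoid /= => /andP[/andP[/andP[/andP[-> _] _] ->] ->].
exists (rpar i); rewrite !inE.
  by rewrite (sym_connect_sym (sym_avoid _ Hsym)).
by apply/negP => /connect_avoid_end h; move: pr; rewrite h eqxx.
Qed.

Lemma rooting : rooted t r rpar rrk.
Proof.
split; first by rewrite /rpar eqxx.
  exact: rrk_par.
move=> i j; rewrite /tp /=; apply/idP/idP.
  move=> tij; have ij : i != j by apply/eqP => h; rewrite h Hirr in tij.
  by rewrite ij /=; case: (rpar3 tij) => ->; rewrite eqxx ?orbT.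
case/andP=> ij /orP[/eqP pi|/eqP pj].
  have ir : i != r by apply/eqP => h; move: ij; rewrite -pi h /rpar eqxx /= eqxx.
  by case/andP: (rpar1 ir); rewrite pi.
have jr : j != r by apply/eqP => h; move: ij; rewrite -pj h /rpar eqxx /= eqxx.
by case/andP: (rpar1 jr); rewrite pj Hsym.
Qed.

End Rooting.

Lemma root_exists (I : finType) (t : rel I) (r : I) : is_tree t ->
  exists par rk, rooted t r par rk.
Proof. by move=> Ht; exists (rpar t r), (rrk t r); apply: rooting. Qed.

Section Dec.
Variables (T : finType) (e : rel T).
Hypothesis esym : symmetric e.

Definition conn (K : {set T}) := forall x y, x \in K -> y \in K -> connect (induced e K) x y.

Lemma conn_of_connected K : connected_set e K -> conn K /\ K != set0.
Proof.
case/andP=> ne /forallP h; split => // x y xK yK.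
by move/implyP: (h x) => /(_ xK) /forallP /(_ y) /implyP /(_ yK).
Qed.

Lemma dec_conn (S K : {set T}) (I : finType) (t : rel I) (B : I -> {set T}) :
  tree_decomp e S t B -> K \subset S -> conn K ->
  conn_nodes t (fun i => B i :&: K != set0).
Proof.
case=> _ bS vS eS cS KS cK a b /set0Pn[x] xa /set0Pn[y] yb.
move: xa yb; rewrite !inE => /andP[xa xK] /andP[yb yK].
pose R := restr t (fun i => B i :&: K != set0).
have sub : forall z, z \in K -> subrel [rel u v | t u v && (z \in B u) && (z \in B v)] R.
  move=> z zK u v /andP[/andP[tuv zu] zv]; rewrite /R /restr /= tuv.
  by apply/andP; split; apply/set0Pn; exists z; rewrite inE ?zu ?zv zK.
have Px : forall j, x \in B j -> connect R a j.
  by move=> j xj; apply: sub_connect (sub x xK) _ _ (cS x a j xa xj).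
have Py : forall j, y \in B j -> connect R a j.
  apply: (@connect_ind' _ _ (fun z => forall j, z \in B j -> connect R a j) x y Px _ (cK x y xK yK)).
  move=> u v Pu /andP[/andP[euv uK] vK] j vj.
  have [m /andP[um vm]] := eS u v (subsetP KS _ uK) (subsetP KS _ vK) euv.
  apply: connect_trans (Pu m um) _.
  exact: sub_connect (sub v vK) _ _ (cS v m j vm vj).
exact: Py b yb.
Qed.

Lemma bramble_cover (S : {set T}) (I : finType) (t : rel I) (B : I -> {set T})
    (Br0 : {set {set T}}) :
  tree_decomp e S t B ->
  (forall A, A \in Br0 -> [/\ A \subset S, A != set0 & conn A]) ->
  (forall A A', A \in Br0 -> A' \in Br0 -> touch e A A') ->
  exists i, hitting Br0 (B i).
Proof.
move=> td hA hT; have [Ht bS vS eS cS] := td.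
have [r _] : exists r : I, r \in I.
  by case: Ht => /card_gt0P [r ?] *; exists r.
have [par [rk Hr]] := root_exists r Ht.
case: (set_0Vmem Br0) => [->| [A0 A0in]].
  by exists r; apply/forallP => A; rewrite in_set0.
pose SA A := fun i => B i :&: A != set0.
have SAne : forall A, A \in Br0 -> exists i, SA A i.
  move=> A /hA[AS /set0Pn[x xA] _].
  have [i xi] := vS x (subsetP AS _ xA).
  by exists i; apply/set0Pn; exists x; rewrite inE xi xA.
have SAc : forall A, A \in Br0 -> conn_nodes t (SA A).
  by move=> A /hA[AS _ cA]; apply: (dec_conn td AS cA).
have topA : forall A, A \in Br0 -> exists w, SA A w /\ istop r par (SA A) w.
  by move=> A /SAne[i Si]; apply: (top_exists Hr Si).
pose Tops u := pb (exists A, [/\ A \in Br0, SA A u & istop r par (SA A) u]).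
have [u0 [Su0 tu0]] := topA _ A0in.
have Tu0 : Tops u0 by apply/pbP; exists A0.
case: (arg_maxnP rk Tu0) => us /pbP[As [Asin Sus tus]] usmax.
exists us; apply/forallP => A; apply/implyP => Ain.
have [w [Sw tw]] := topA _ Ain.
have wle : rk w <= rk us by apply: usmax; apply/pbP; exists A.
have [c [SAc' SAsc]] : exists c, SA A c /\ SA As c.
  case/orP: (hT _ _ Ain Asin) => [/set0Pn[v]|/existsP[x /andP[xA /existsP[y /andP[yA exy]]]]].
    rewrite inE => /andP[vA vAs].
    have [/hA[AS _ _] _] := conj Ain Asin.
    have [c vc] := vS v (subsetP AS _ vA).
    by exists c; split; apply/set0Pn; exists v; rewrite inE vc ?vA ?vAs.
  have [/hA[AS _ _] /hA[AsS _ _]] := conj Ain Asin.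
  have [c /andP[xc yc]] := eS x y (subsetP AS _ xA) (subsetP AsS _ yA) exy.
  by exists c; split; apply/set0Pn; [exists x|exists y]; rewrite inE ?xc ?yc ?xA ?yA.
have d1 := conn_top Hr (SAc _ Asin) Sus SAsc tus.
have d2 := conn_top Hr (SAc _ Ain) Sw SAc' tw.
case: (desc_comp d1 d2) => [d3|d3].
  exact: (@climb _ t r par rk Hr (SA A) w c us (SAc _ Ain) Sw tw SAc' d1 d3).
case: (eqVneq w us) => [<- //|ne].
by have := desc_rk Hr d3 ne; rewrite ltnNge wle.
Qed.

End Dec.

Section Constr.
Variables (T : finType) (e : rel T).
Hypothesis esym : symmetric e.

Lemma td_single (X : {set T}) :
  exists t : rel unit, tree_decomp e X t (fun _ => X).
Proof.
pose par := fun _ : unit => tt.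
have Hr : rooted (tp par) tt par (fun _ => 0) by split => // -[] /=; rewrite eqxx.
exists (tp par); split.
- exact: rooted_tree Hr.
- by move=> _; apply: subxx.
- by move=> v vX; exists tt.
- by move=> u v uX vX _; exists tt; rewrite uX vX.
- by move=> v [] [] _ _; apply: connect0.
Qed.

Lemma td_two (X C N : {set T}) :
  [disjoint X & C] -> N \subset X ->
  (forall u v, u \in X -> v \in C -> e u v -> u \in N) ->
  exists t : rel bool, tree_decomp e (X :|: C) t (fun b => if b then X else C :|: N).
Proof.
move=> dXC NX hN.
pose par := fun _ : bool => true.
pose rk := fun b : bool => if b then 0 else 1.
have Hr : rooted (tp par) true par rk by split => // -[].
exists (tp par); split.
- exact: rooted_tree Hr.
- case; first exact: subsetUl.
  by apply/subsetP => v; rewrite !inE => /orP[->|/(subsetP NX) ->]; rewrite ?orbT.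
- by move=> v; rewrite inE => /orP[vX|vC]; [exists true | exists false; rewrite inE vC].
- move=> u v; rewrite !inE => /orP[uX|uC] /orP[vX|vC] euv.
  + by exists true; rewrite uX vX.
  + by exists false; rewrite !inE vC (hN u v) ?orbT.
  + by rewrite esym in euv; exists false; rewrite !inE uC (hN v u) ?orbT.
  + by exists false; rewrite !inE uC vC.
- move=> v [] [] vi vj; try exact: connect0.
  + apply: connect1; rewrite /= vi vj andbT.
    by rewrite /tp /par /=.
  + apply: connect1; rewrite /= vi vj andbT.
    by rewrite /tp /par /=.
Qed.

Section Glue.
Variables (S1 S2 : {set T}) (I1 I2 : finType) (t1 : rel I1) (t2 : rel I2).
Variables (B1 : I1 -> {set T}) (B2 : I2 -> {set T}) (x1 : I1) (x2 : I2).
Hypothesis D1 : tree_decomp e S1 t1 B1.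
Hypothesis D2 : tree_decomp e S2 t2 B2.
Hypothesis H1 : S1 :&: S2 \subset B1 x1.
Hypothesis H2 : S1 :&: S2 \subset B2 x2.
Hypothesis Hcross : forall u v, u \in S1 -> v \in S2 -> e u v -> (u \in S2) || (v \in S1).

Definition gbag (n : I1 + I2) := match n with inl i => B1 i | inr j => B2 j end.

Lemma glue : exists t : rel (I1 + I2), tree_decomp e (S1 :|: S2) t gbag.
Proof.
have [Ht1 bS1 vS1 eS1 cS1] := D1; have [Ht2 bS2 vS2 eS2 cS2] := D2.
have [par1 [rk1 Hr1]] := root_exists x1 Ht1.
have [par2 [rk2 Hr2]] := root_exists x2 Ht2.
pose par n := match n with inl i => inl (par1 i)
  | inr j => if j == x2 then inl x1 else inr (par2 j) end : I1 + I2.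
pose rk n := match n with inl i => rk1 i | inr j => rk2 j + rk1 x1 + 1 end.
have Hr : rooted (tp par) (inl x1) par rk.
  split => //; first by rewrite /par /= (par_r Hr1).
  case=> [i|j] /=.
    by move=> ne; apply: (rk_par Hr1); apply: contra ne => /eqP->.
  move=> _; case: (eqVneq j x2) => [_|jx]; first by rewrite addn1 ltnS leq_addl.
  by rewrite ltn_add2r ltn_add2r; apply: (rk_par Hr2).
exists (tp par); split.
- exact: rooted_tree Hr.
- by case=> [i|j] /=; [apply: subset_trans (bS1 i) (subsetUl _ _)|
                       apply: subset_trans (bS2 j) (subsetUr _ _)].
- move=> v; rewrite inE => /orP[/vS1[i vi]|/vS2[j vj]]; [by exists (inl i)|by exists (inr j)].
- move=> u v; rewrite !inE => /orP[uS|uS] /orP[vS|vS] euv.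
  + by have [i /andP[ui vi]] := eS1 _ _ uS vS euv; exists (inl i); rewrite /= ui vi.
  + case/orP: (Hcross uS vS euv) => [uS2|vInS1].
      by have [i /andP[ui vi]] := eS2 _ _ uS2 vS euv; exists (inr i); rewrite /= ui vi.
    by have [i /andP[ui vi]] := eS1 _ _ uS vInS1 euv; exists (inl i); rewrite /= ui vi.
  + rewrite esym in euv; case/orP: (Hcross vS uS euv) => [vInS2|uInS1].
      by have [i /andP[vi ui]] := eS2 _ _ uS vInS2 (etrans (esym _ _) euv); exists (inr i); rewrite /= ui vi.
    by have [i /andP[vi ui]] := eS1 _ _ uInS1 vS (etrans (esym _ _) euv); exists (inl i); rewrite /= ui vi.
  + by have [i /andP[ui vi]] := eS2 _ _ uS vS euv; exists (inr i); rewrite /= ui vi.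
- move=> v n1 n2 vn1 vn2.
  pose Sv := fun n => v \in gbag n.
  suff : conn_nodes (tp par) Sv by move/(_ n1 n2 vn1 vn2).
  pose S1v := fun i => v \in B1 i.
  pose S2v := fun j => v \in B2 j.
  have c1 : conn_nodes t1 S1v by move=> a b ha hb; apply: cS1.
  have c2 : conn_nodes t2 S2v by move=> a b ha hb; apply: cS2.
  case: (pickP S1v) => [i0 vi0|none].
    have [w [Sw tw]] := top_exists Hr1 vi0.
    apply: (@conn_of_top _ _ _ _ _ Hr Sv (inl w) Sw).
    case=> [i|j] Sa ne.
      have iw : i != w by apply: contra ne => /eqP->.
      have ix : i != x1.
        apply/eqP => ix; move: iw; rewrite ix.
        by rewrite (top_root Hr1 c1 _ Sw tw) ?eqxx // -ix.
      by rewrite /= ix /=; apply: (top_par Hr1 c1 Sw tw Sa iw).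
    have vS : v \in S1 :&: S2 by rewrite inE (subsetP (bS1 i0)) // (subsetP (bS2 j)).
    have vx1 := subsetP H1 _ vS; have vx2 := subsetP H2 _ vS.
    rewrite /=; case: (eqVneq j x2) => [//|jx] /=.
    apply: (top_par Hr2 c2 vx2 (root_istop _ _ _) Sa jx).
  have n1' : forall i, (v \in B1 i) = false by move=> i; exact: none i.
  case: (boolP [exists j, S2v j]) => [/existsP[j0 vj0]|/existsPn none2]; last first.
    have n2' : forall j, (v \in B2 j) = false by move=> j; apply: negbTE; exact: none2 j.
    by move: vn1; case: n1 => [i|j] /=; rewrite ?n1' ?n2'.
  have [w [Sw tw]] := top_exists Hr2 vj0.
  apply: (@conn_of_top _ _ _ _ _ Hr Sv (inr w) Sw).
  case=> [i|j] Sa ne; first by move: Sa; rewrite /Sv /= n1'.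
  have jw : j != w by apply: contra ne => /eqP->.
  have jx : j != x2.
    apply/eqP => jx; move: jw; rewrite jx.
    by rewrite (top_root Hr2 c2 _ Sw tw) ?eqxx // -jx.
  by rewrite /= (negbTE jx) /=; apply: (top_par Hr2 c2 Sw tw Sa jw).
Qed.

End Glue.
End Constr.

Section Comp.
Variables (T : finType) (e : rel T).
Hypothesis esym : symmetric e.

Lemma induced_mem (A : {set T}) a b : connect (induced e A) a b -> a \in A -> b \in A.
Proof.
move=> h aA; apply: (@connect_ind' _ _ (fun z => z \in A) a b aA _ h).
by move=> u v _ /andP[/andP[_ _] ->].
Qed.

Lemma induced_sym (A : {set T}) : symmetric (induced e A).
Proof. by move=> x y; rewrite /induced /= esym andbAC. Qed.

Lemma gen_conn (A : {set T}) a : conn e [set v | connect (induced e A) a v].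
Proof.
set K := [set v | _].
have h : forall z, connect (induced e A) a z -> connect (induced e K) a z.
  move=> z hz.
  pose P := fun z => connect (induced e A) a z /\ connect (induced e K) a z.
  have base : P a by split; apply: connect0.
  have stepP : forall u v, P u -> induced e A u v -> P v.
    move=> u v [hu hu'] euv.
    have hv : connect (induced e A) a v := connect_trans hu (connect1 euv).
    split => //; apply: connect_trans hu' (connect1 _).
    case/andP: euv => /andP[euv' _] _.
    by rewrite /induced /= euv' !inE hu hv.
  by case: (@connect_ind' _ _ P a z base stepP hz).
move=> x y; rewrite !inE => hx hy.
apply: connect_trans (_ : connect _ x a) (h _ hy).
by rewrite (sym_connect_sym (induced_sym K)) h.
Qed.

Lemma cross_edge (A : {set T}) (P : pred T) x y : connect (induced e A) x y -> P x -> ~~ P y ->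
  exists u v, [/\ e u v, u \in A, v \in A, P u & ~~ P v].
Proof.
move=> h Px; move: y h.
have := (@connect_ind' _ (induced e A)
  (fun z => ~~ P z -> exists u v, [/\ e u v, u \in A, v \in A, P u & ~~ P v]) x).
move=> H y h; apply: (H y) => //; first by rewrite Px.
move=> u v Hu /andP[/andP[euv uA] vA] nPv.
case: (boolP (P u)) => Pu; first by exists u, v.
exact: Hu.
Qed.

Variable X : {set T}.
Definition comp c := [set v | connect (induced e (~: X)) c v].

Lemma comp_notX c v : c \notin X -> v \in comp c -> v \notin X.
Proof.
move=> cX; rewrite /comp inE => h; have := induced_mem h.
by rewrite !inE => /(_ cX).
Qed.

Lemma comp_self c : c \in comp c.
Proof. by rewrite /comp inE connect0. Qed.

Lemma comp_closed c u v : c \notin X -> u \in comp c -> v \notin X -> e u v -> v \in comp c.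
Proof.
move=> cX uc vX euv; have uX := comp_notX cX uc.
rewrite /comp inE in uc; rewrite /comp inE; apply: connect_trans uc (connect1 _).
by rewrite /induced /= euv !inE vX uX.
Qed.

Lemma comp_eq c v : v \in comp c -> comp v = comp c.
Proof.
rewrite /comp inE => h; apply/setP => w; rewrite !inE; apply/idP/idP => hw.
  exact: connect_trans h hw.
by apply: connect_trans hw; rewrite (sym_connect_sym (induced_sym _)).
Qed.

Lemma comp_conn c : conn e (comp c).
Proof. exact: gen_conn. Qed.

End Comp.

Lemma touch_sym (T : finType) (e : rel T) : symmetric e -> forall A B, touch e A B = touch e B A.
Proof.
move=> esym A B; rewrite /touch setIC; congr (_ || _).
apply/existsP/existsP => -[x /andP[xA /existsP[y /andP[yB exy]]]];
  by exists y; rewrite yB; apply/existsP; exists x; rewrite xA esym.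
Qed.

Lemma hitting_U1 (T : finType) (B : {set {set T}}) C H :
  hitting (C |: B) H = (H :&: C != set0) && hitting B H.
Proof.
rewrite /hitting; apply/forallP/andP => [h|[h1 /forallP h2] A].
  split; first by move/implyP: (h C); rewrite setU11; apply.
  by apply/forallP => A; apply/implyP => Ain; move/implyP: (h A); rewrite inE Ain orbT; apply.
by apply/implyP; rewrite in_setU1 => /orP[/eqP eA|Ain]; [rewrite eA | move/implyP: (h2 A); apply].
Qed.

Lemma mem_bigcup_seq (T : finType) (I : eqType) (F : I -> {set T}) (cs : seq I) v :
  (v \in \bigcup_(c <- cs) F c) = has (fun c => v \in F c) cs.
Proof. by elim: cs => [|c cs IH]; rewrite ?big_nil ?big_cons ?inE ?IH. Qed.

Lemma min_cover (T : finType) (B : {set {set T}}) (hT : hitting B setT) :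
  exists X, hitting B X /\ forall Y, hitting B Y -> #|X| <= #|Y|.
Proof.
pose P := hitting B.
have hP : P setT by [].
case: (arg_minnP (fun H : {set T} => #|H|) hP) => X hX Xmin.
by exists X.
Qed.

Section Hard.
Variables (T : finType) (e : rel T).
Hypothesis esym : symmetric e.
Variable s : nat.
Hypothesis NoBig : forall B, is_bramble e B -> bramble_order B <= s.

Definition adm (I : finType) (B : {set {set T}}) (Bg : I -> {set T}) :=
  forall i, s < #|Bg i| -> ~~ hitting B (Bg i).

Definition good (B : {set {set T}}) (S X : {set T}) := exists (I : finType) (t : rel I) (Bg : I -> {set T}),
  [/\ tree_decomp e S t Bg, exists i, X \subset Bg i & adm B Bg].

Lemma push (I : finType) (t : rel I) (V : I -> {set T}) t0 par rk (K : {set T}) x j i :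
  tree_decomp e setT t V -> rooted t t0 par rk -> conn e K -> V t0 :&: K != set0 ->
  x \in K -> x \in V j -> desc par j i -> V i :&: K != set0.
Proof.
move=> D Hr cK h0 xK xj dji.
have cS := dec_conn D (subsetT K) cK.
have Sj : V j :&: K != set0 by apply/set0Pn; exists x; rewrite inE xj xK.
exact: (@climb _ t t0 par rk Hr (fun n => V n :&: K != set0) t0 j i cS h0
          (root_istop _ _ _) Sj dji (desc_root Hr i)).
Qed.

Lemma glue_good B X U C : good B (X :|: U) X -> good B (X :|: C) X ->
  (X :|: U) :&: (X :|: C) \subset X ->
  (forall u v, u \in X :|: U -> v \in X :|: C -> e u v -> (u \in X :|: C) || (v \in X :|: U)) ->
  good B (X :|: (C :|: U)) X.
Proof.
move=> [I1 [t1 [B1 [D1 [x1 X1] a1]]]] [I2 [t2 [B2 [D2 [x2 X2] a2]]]] hI hc.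
have [t D] := glue esym D1 D2 (subset_trans hI X1) (subset_trans hI X2) hc.
exists (I1 + I2)%type, t, (gbag B1 B2); split.
- by have -> : X :|: (C :|: U) = (X :|: U) :|: (X :|: C)
    by apply/setP => v; rewrite !inE; case: (v \in X); case: (v \in C); case: (v \in U).
- by exists (inl x1).
- by case=> [i|j] /=; [apply: a1|apply: a2].
Qed.

Lemma step B : is_bramble e B ->
  (forall B', is_bramble e B' -> #|~: B'| < #|~: B| ->
     exists (I : finType) (t : rel I) (Bg : I -> {set T}), tree_decomp e setT t Bg /\ adm B' Bg) ->
  exists (I : finType) (t : rel I) (Bg : I -> {set T}), tree_decomp e setT t Bg /\ adm B Bg.
Proof.
move=> hB IH; apply: NNPP => H0.
have [hconn htouch] := hB.
have hT : hitting B setT.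
  by apply/forallP => A; apply/implyP => Ain; rewrite setTI; case/andP: (hconn A Ain).
have [X [hX Xmin]] := min_cover hT.
have Xs : #|X| <= s.
  apply: leq_trans (NoBig hB); rewrite /bramble_order; apply: (big_ind (fun n => #|X| <= n)) => //.
  - exact: max_card.
  - by move=> a b ha hb; rewrite leq_min ha hb.
have compgood : forall c, c \notin X -> good B (X :|: comp e X c) X.
  move=> c cX.
  set C := comp e X c.
  have CX : forall v, v \in C -> v \notin X by move=> v; apply: comp_notX cX.
  have cC : c \in C by apply: comp_self.
  have Cconn : conn e C := @comp_conn _ _ esym X c.
  have Cclosed : forall u v, u \in C -> v \notin X -> e u v -> v \in C.
    by move=> u v; apply: comp_closed cX.
  case: (boolP [exists B0 in B, ~~ touch e B0 C]) => [/existsP[B0 /andP[B0in nt]]|/existsPn allt].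
    pose N := [set x in X | [exists y in C, e x y]].
    have dXC : [disjoint X & C].
      rewrite disjoints_subset; apply/subsetP => v vX; rewrite inE; apply/negP => vC.
      by have := CX v vC; rewrite vX.
    have NX : N \subset X by apply/subsetP => v; rewrite inE => /andP[].
    have hN : forall u v, u \in X -> v \in C -> e u v -> u \in N.
      by move=> u v uX vC euv; rewrite inE uX; apply/existsP; exists v; rewrite vC euv.
    have [t D] := td_two esym dXC NX hN.
    exists bool, t, (fun b => if b then X else C :|: N); split; [exact: D | by exists true | ].
    case => /=; first by rewrite ltnNge Xs.
    move=> _; rewrite /hitting negb_forall; apply/existsP; exists B0; rewrite B0in /= negbK.
    apply/eqP/setP => v; rewrite in_setI in_setU in_set0; apply/negP.
    move: nt; rewrite /touch negb_or => /andP[/negP nt1 /negP nt2].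
    case/andP => /orP[vC | ]; last first.
      rewrite /N in_set => /andP[vX /existsP[y /andP[yC evy]]] vB0.
      by apply: nt2; apply/existsP; exists v; rewrite vB0; apply/existsP; exists y; rewrite yC evy.
    move=> vB0.
    by apply: nt1; apply/set0Pn; exists v; rewrite in_setI vB0 vC.
  have tB : forall A, A \in B -> touch e A C.
    by move=> A Ain; move: (allt A); rewrite Ain negbK.
  set B' := C |: B.
  have hB' : is_bramble e B'.
    split.
      move=> A; rewrite in_setU1 => /orP[/eqP-> | Ain]; last exact: hconn.
      apply/andP; split; first by apply/set0Pn; exists c.
      apply/forallP => x; apply/implyP => xC; apply/forallP => y; apply/implyP => yC.
      exact: Cconn.
    move=> A A'; rewrite !in_setU1 => /orP[/eqP-> | Ain] /orP[/eqP-> | A'in].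
    - by rewrite /touch setIid; apply/orP; left; apply/set0Pn; exists c.
    - by rewrite touch_sym // tB.
    - exact: tB.
    - exact: htouch.
  have CnB : C \notin B.
    apply/negP => CB; move/forallP: hX => /(_ C); rewrite CB /= => /set0Pn[v].
    by rewrite inE => /andP[vX vC]; have := CX v vC; rewrite vX.
  have lt : #|~: B'| < #|~: B|.
    have cB' : #|B'| = #|B|.+1 by rewrite /B' cardsU1 CnB.
    have h1 := cardsC B; have h2 := cardsC B'; rewrite cB' -h1 addSn -addnS in h2.
    by move/addnI: h2 => <-.
  have [I [t [V [D admB']]]] := IH _ hB' lt.
  have nadm : ~ adm B V by move=> h; apply: H0; exists I, t, V.
  have [t0 /andP[big0 hit0]] : exists t0, (s < #|V t0|) && hitting B (V t0).
    apply: NNPP => nex; apply: nadm => i bi; apply/negP => hi; apply: nex.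
    by exists i; rewrite bi hi.
  have VC0 : V t0 :&: C = set0.
    by have := admB' t0 big0; rewrite hitting_U1 hit0 andbT negbK => /eqP.
  have [Ht bS vS eS cS] := D.
  have [par [rk Hr]] := root_exists t0 Ht.
  pose Xi i := [set x in X | pb (exists j, x \in V j /\ desc par j i)].
  pose U i := (V i :&: C) :|: Xi i.
  have XiX : forall i, Xi i \subset X.
    by move=> i; apply/subsetP => x; rewrite inE => /andP[].
  have inXi : forall x i j, x \in X -> x \in V j -> desc par j i -> x \in Xi i.
    by move=> x i j xX xj dji; rewrite inE xX /=; apply/pbP; exists j.
  have inU : forall v j, v \in X :|: C -> v \in V j -> v \in U j.
    move=> v j; rewrite in_setU => /orP[vX|vC] vj.
      by rewrite /U in_setU (inXi v j j vX vj (desc_refl _ _)) orbT.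
    by rewrite /U in_setU in_setI vj vC.
  have XU0 : X \subset U t0.
    apply/subsetP => x xX; have [j xj] := vS x (in_setT x).
    by rewrite /U in_setU (inXi x t0 j xX xj (desc_root Hr j)) orbT.
  have sizeU : forall i, #|U i| <= #|V i|.
    move=> i; set Y := (X :\: Xi i) :|: (V i :\: C).
    have hY : hitting B Y.
      apply/forallP => A; apply/implyP => Ain.
      have AX : X :&: A != set0 by move/forallP: hX => /(_ A); rewrite Ain.
      case: (boolP [exists x in X :&: A, x \notin Xi i]) => [/existsP[x /andP[xXA xXi]]|/existsPn allin].
        move: xXA; rewrite in_setI => /andP[xX xA].
        by apply/set0Pn; exists x; rewrite /Y in_setI in_setU !in_setD xXi xX xA.
      have [a1] : exists a1, a1 \in V t0 :&: A.
        by move/forallP: hit0 => /(_ A); rewrite Ain => /set0Pn.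
      rewrite in_setI => /andP[a1V a1A].
      have a1C : a1 \notin C.
        apply/negP => a1C; have : a1 \in V t0 :&: C by rewrite in_setI a1V a1C.
        by rewrite VC0 in_set0.
      set K := [set v | connect (induced e (A :\: C)) a1 v].
      have KAC : forall v, v \in K -> v \in A :\: C.
        move=> v; rewrite inE => h; apply: (induced_mem h); by rewrite in_setD a1C a1A.
      have cK : conn e K := @gen_conn _ _ esym (A :\: C) a1.
      have a1K : a1 \in K by rewrite inE connect0.
      have [x' x'K x'X] : exists2 x', x' \in K & x' \in X.
        apply: NNPP => nex.
        have noX : forall v, v \in K -> v \notin X.
          by move=> v vK; apply/negP => vX; apply: nex; exists v.
        case/set0Pn: AX => x0; rewrite in_setI => /andP[x0X x0A].
        have [cA _] := conn_of_connected (hconn A Ain).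
        have x0K : x0 \notin K by apply/negP => /noX; rewrite x0X.
        case: (@cross_edge _ _ _ (fun v => v \in K) _ _ (cA a1 x0 a1A x0A) a1K x0K)
          => u [v [euv uA vA uK vK]].
        have := KAC u uK; rewrite in_setD => /andP[uC _].
        have uX := noX u uK.
        case: (boolP (v \in C)) => vC.
          have evu : e v u by rewrite esym.
          by rewrite (Cclosed v u vC uX evu) in uC.
        apply: (negP vK); rewrite inE; move: uK; rewrite inE => uK.
        apply: connect_trans uK (connect1 _).
        by rewrite /induced /= euv !in_setD uC uA vC vA.
      have x'A : x' \in A by move: (KAC x' x'K); rewrite in_setD => /andP[].
      have x'Xi : x' \in Xi i by have := allin x'; rewrite in_setI x'X x'A /= negbK.
      move: x'Xi; rewrite inE x'X /= => /pbP[j [x'j dji]].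
      have h0K : V t0 :&: K != set0 by apply/set0Pn; exists a1; rewrite in_setI a1V a1K.
      case/set0Pn: (push D Hr cK h0K x'K x'j dji) => w; rewrite in_setI => /andP[wV wK].
      move: (KAC w wK); rewrite in_setD => /andP[wC wA].
      by apply/set0Pn; exists w; rewrite /Y in_setI in_setU !in_setD wV wC wA orbT.
    have h1 := Xmin _ hY.
    have h2 := cardsU (X :\: Xi i) (V i :\: C).
    have h3 := cardsD X (Xi i); rewrite (setIidPr (XiX i)) in h3.
    have h4 := cardsU (V i :&: C) (Xi i).
    have h5 := cardsID C (V i).
    have h6 := subset_leq_card (XiX i).
    rewrite /Y in h1; rewrite /U; lia.
  exists I, t, U; split.
  - split.
    + exact: Ht.
    + move=> i; apply/subsetP => v; rewrite /U in_setU in_setI => /orP[/andP[_ vC]|vXi].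
        by rewrite in_setU vC orbT.
      by move: vXi; rewrite inE => /andP[vX _]; rewrite in_setU vX.
    + by move=> v vXC; have [j vj] := vS v (in_setT v); exists j; apply: inU vXC vj.
    + move=> u v uS vS' euv; have [j /andP[uj vj]] := eS u v (in_setT u) (in_setT v) euv.
      by exists j; rewrite (inU _ _ uS uj) (inU _ _ vS' vj).
    + move=> v i1 i2 vi1 vi2.
      case: (boolP (v \in C)) => vC.
        have vX := CX v vC.
        have eqU : forall n, (v \in U n) = (v \in V n).
          by move=> n; rewrite /U in_setU in_setI vC andbT inE (negbTE vX) /= orbF.
        rewrite eqU in vi1; rewrite eqU in vi2.
        apply: sub_connect (cS v i1 i2 vi1 vi2) => a b /andP[/andP[tab va] vb].
        by rewrite /= tab !eqU va vb.
      have vXi : forall n, v \in U n -> v \in Xi n.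
        by move=> n; rewrite /U in_setU in_setI (negbTE vC) andbF.
      pose S := fun n => v \in U n.
      suff : conn_nodes t S by move/(_ i1 i2 vi1 vi2).
      have St0 : S t0.
        move: (vXi _ vi1); rewrite inE => /andP[vX /pbP[j [vj dj]]].
        by rewrite /S /U in_setU (inXi v t0 j vX vj (desc_root Hr j)) orbT.
      apply: (conn_of_top Hr St0) => a Sa ne.
      rewrite ne /=; move: (vXi _ Sa); rewrite inE => /andP[vX /pbP[j [vj dj]]].
      by rewrite /S /U in_setU (inXi v (par a) j vX vj (desc_trans dj (desc_par1 _ a))) orbT.
  - by exists t0.
  - move=> i bigU.
    have bigV : s < #|V i| := leq_trans bigU (sizeU i).
    have := admB' i bigV; rewrite hitting_U1 negb_and negbK => /orP[/eqP ViC | nhit].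
      have : U i \subset X by rewrite /U ViC set0U XiX.
      by move/subset_leq_card => h; move: bigU; rewrite ltnNge (leq_trans h Xs).
    move: nhit; rewrite /hitting negb_forall => /existsP[B0]; rewrite negb_imply negbK.
    case/andP => B0in /eqP ViB0.
    apply/negP => /forallP /(_ B0); rewrite B0in /= => /set0Pn[v].
    rewrite in_setI in_setU => /andP[/orP[vVC|vXi] vB0].
      move: vVC; rewrite in_setI => /andP[vV _].
      have : v \in V i :&: B0 by rewrite in_setI vV vB0.
      by rewrite ViB0 in_set0.
    move: vXi; rewrite inE => /andP[vX /pbP[j [vj dji]]].
    have [cB0 _] := conn_of_connected (hconn B0 B0in).
    have h0 : V t0 :&: B0 != set0 by move/forallP: hit0 => /(_ B0); rewrite B0in.
    by move: (push D Hr cB0 h0 vB0 vj dji); rewrite ViB0 eqxx.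
have allg : forall cs : seq T, all (fun c => c \notin X) cs ->
    good B (X :|: \bigcup_(c <- cs) comp e X c) X.
  elim=> [|c cs IHcs].
    move=> _; rewrite big_nil setU0.
    have [t D] := td_single e X.
    exists unit, t, (fun _ => X); split; [exact: D | by exists tt | ].
    by move=> _; rewrite ltnNge Xs.
  rewrite /= => /andP[cX acs]; rewrite big_cons.
  set U := \bigcup_(d <- cs) _.
  have UX : forall v, v \in U -> v \notin X.
    move=> v; rewrite /U mem_bigcup_seq => /hasP[d dcs vd].
    by apply: comp_notX vd; move/allP: acs => /(_ d dcs).
  case: (boolP (c \in U)) => cU.
    have -> : comp e X c :|: U = U.
      apply/setUidPr/subsetP => v vc; move: cU; rewrite /U !mem_bigcup_seq => /hasP[d dcs cd].
      by apply/hasP; exists d => //; rewrite -(comp_eq esym cd).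
    exact: IHcs.
  have disj : forall v, v \in comp e X c -> v \in U -> False.
    move=> v vc; rewrite /U mem_bigcup_seq => /hasP[d dcs vd].
    move: cU; rewrite /U mem_bigcup_seq => /hasP; apply; exists d => //.
    by rewrite -(comp_eq esym vd) (comp_eq esym vc) comp_self.
  apply: glue_good (IHcs acs) (compgood c cX) _ _.
    apply/subsetP => v; rewrite in_setI !in_setU => /andP[/orP[->//|vU] /orP[->//|vc]].
    by case: (disj v vc vU).
  move=> u v; rewrite !in_setU => /orP[uX|uU] /orP[vX|vc] euv; rewrite ?uX ?vX ?orbT //.
  have uX := UX u uU; have evu : e v u by rewrite esym.
  by rewrite (comp_closed cX vc uX evu) orbT.
have := allg (enum (~: X)).
have -> : X :|: \bigcup_(c <- enum (~: X)) comp e X c = setT.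
  apply/setP => v; rewrite !inE mem_bigcup_seq; case: (boolP (v \in X)) => //= vX.
  by apply/hasP; exists v; rewrite ?mem_enum ?inE // comp_self.
move=> h.
have [I [t [Bg [D _ a]]]] : good B setT X.
  by apply: h; apply/allP => v; rewrite mem_enum inE.
by apply: H0; exists I, t, Bg.
Qed.

End Hard.


Lemma main_hard (T : finType) (e : rel T) (esym : symmetric e) (s : nat)
  (NoBig : forall B, is_bramble e B -> bramble_order B <= s) :
  forall B, is_bramble e B ->
  exists (I : finType) (t : rel I) (Bg : I -> {set T}), tree_decomp e setT t Bg /\ adm s B Bg.
Proof.
move=> B; move: {2}#|~: B| (leqnn #|~: B|) => n; elim: n B => [|n IHn] B hn hB.
  apply: (step esym NoBig hB) => B' _ lt; by move: lt; rewrite ltnNge (leq_trans hn).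
apply: (step esym NoBig hB) => B' hB' lt; apply: IHn hB'.
by rewrite -ltnS; apply: leq_trans lt hn.
Qed.

Lemma bigmin_le (T : finType) (P : pred T) (F : T -> nat) d (x : T) :
  P x -> \big[minn/d]_(i | P i) F i <= F x.
Proof.
move=> Px; have : x \in index_enum T by rewrite mem_index_enum.
elim: (index_enum T) => [//|y r IH]; rewrite inE big_cons.
case/orP=> [/eqP <-|xr]; first by rewrite Px geq_minl.
case: (P y) => /=; last exact: IH xr.
by rewrite geq_min (IH xr) orbT.
Qed.

Lemma order_le (T : finType) (B : {set {set T}}) (H : {set T}) : hitting B H -> bramble_order B <= #|H|.
Proof. by move=> hH; rewrite /bramble_order; apply: (@bigmin_le _ (hitting B)). Qed.

Lemma min_le_order (T : finType) (B : {set {set T}}) (X : {set T}) :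
  (forall Y, hitting B Y -> #|X| <= #|Y|) -> #|X| <= bramble_order B.
Proof.
move=> Xmin; rewrite /bramble_order; apply: (big_ind (fun n => #|X| <= n)) => //.
- exact: max_card.
- by move=> a b ha hb; rewrite leq_min ha hb.
Qed.

Lemma hitT (T : finType) (e : rel T) (B : {set {set T}}) :
  (forall A, A \in B -> connected_set e A) -> hitting B setT.
Proof. by move=> hc; apply/forallP => A; apply/implyP => Ain; rewrite setTI; case/andP: (hc A Ain). Qed.

Theorem lemma2p2 (T : finType) (e : rel T) (esym : symmetric e) (eirr : irreflexive e)
    (Br : {set {set T}}) (X : {set T}) (k : nat) (twG twGX : int) :
  max_order_bramble e Br ->
  bramble_order (bramble_restr Br X) <= k ->
  has_treewidth e [set: T] twG ->
  has_treewidth e (~: X) twGX ->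
  (twG <= twGX + k%:Z)%R.
Proof.
case=> hBr maxBr hk [_ twGmin] [[I' [t' [Bg' [D' w']]]] _].
set s := bramble_order Br.
have NoBig : forall B, is_bramble e B -> bramble_order B <= s by move=> B /maxBr.
have hB0 : is_bramble e (set0 : {set {set T}}) by split => A; rewrite in_set0.
have [I [t [Bg [D a]]]] := main_hard esym NoBig hB0.
have bagle : forall i, #|Bg i| <= s.
  move=> i; rewrite leqNgt; apply/negP => /a; rewrite /hitting.
  by move/forallP => h; apply: h => A; rewrite in_set0.
have maxle : (\max_(i : I) #|Bg i|)%N <= s by apply/bigmax_leqP => i _; apply: bagle.
have h1 := twGmin _ _ _ D.
case: hBr => hconn htouch.
pose Br0 := [set A in Br | A :&: X == set0].
have [i' hit'] : exists i', hitting Br0 (Bg' i').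
  apply: (bramble_cover D').
    move=> A; rewrite inE => /andP[Ain /eqP AX].
    have [cA ne] := conn_of_connected (hconn A Ain).
    split => //; apply/subsetP => v vA; rewrite inE; apply/negP => vX.
    have : v \in A :&: X by rewrite inE vA vX.
    by rewrite AX in_set0.
  by move=> A A'; rewrite !inE => /andP[Ain _] /andP[A'in _]; apply: htouch.
have hc0 : forall A, A \in Br0 -> connected_set e A by move=> A; rewrite inE => /andP[/hconn].
have hcX : forall A, A \in bramble_restr Br X -> connected_set e A.
  by move=> A; rewrite inE => /andP[/hconn].
have [H1 [hH1 H1min]] := min_cover (hitT hc0).
have [H2 [hH2 H2min]] := min_cover (hitT hcX).
have le1 : #|H1| <= #|Bg' i'| := leq_trans (min_le_order H1min) (order_le hit').
have le2 : #|H2| <= k := leq_trans (min_le_order H2min) hk.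
have hit12 : hitting Br (H1 :|: H2).
  apply/forallP => A; apply/implyP => Ain.
  case: (eqVneq (A :&: X) set0) => AX.
    move/forallP: hH1 => /(_ A); rewrite inE Ain AX eqxx /= => /set0Pn[v].
    by rewrite inE => /andP[vH vA]; apply/set0Pn; exists v; rewrite !inE vH vA.
  move/forallP: hH2 => /(_ A); rewrite inE Ain AX /= => /set0Pn[v].
  by rewrite inE => /andP[vH vA]; apply/set0Pn; exists v; rewrite !inE vH vA orbT.
have sle : s <= #|H1| + #|H2|.
  by apply: leq_trans (order_le hit12) _; rewrite cardsU leq_subr.
have bigle : #|Bg' i'| <= (\max_(i : I') #|Bg' i|)%N by apply: leq_bigmax.
move: h1 w'; rewrite /td_width => h1 w'.
lia.
Qed.
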